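(* Let $b_0=1$ and let $b_1,\dots,b_d$ be nonzero reals with $b_d>0$; put $a_k=b_k/|b_{k-1}|$. Then $$g_d(b_1,\dots,b_d)=f_d\Big(b_1,\frac{b_2}{b_1},\dots,\frac{b_d}{b_{d-1}}\Big)=\operatorname{sign}\Big(\prod_{i=1}^d b_i\Big)\sum_{s_1=1}^{\overline{a_1}}\ \sum_{s_2=1}^{\overline{a_2s_1}}\cdots\sum_{s_d=1}^{\overline{a_ds_{d-1}}}1,$$ where the sums are in the extended sense and $\overline{a_{i+1}s_i}$ means $a_{i+1}s_i$ if $a_{i+1}>0$ and $-a_{i+1}s_i-1$ if $a_{i+1}<0$ (similarly $\overline{a_1}=a_1$ or $-a_1-1$ according to the sign of $a_1$).
   Context: Let $B_k(x)$ be the Bernoulli polynomials ($te^{tx}/(e^t-1)=\sum_k B_k(x)t^k/k!$), $B_k=B_k(0)$, and $P_k(x)=(B_{k+1}(x+1)-B_{k+1})/(k+1)$. Extended sum: for a polynomial $h(s)=\sum_{k\ge0}h_ks^k$ (coefficients in a polynomial ring over $\mathbb R$) and upper limit $u$, $\sum_{s=1}^{u}h:=h_0u+\sum_{k\ge1}h_kP_k(u)$; this agrees with the usual sum for positive integers $u$. $f_d(a_1,\dots,a_d)=\sum_{s_1=1}^{a_1}\sum_{s_2=1}^{a_2s_1}\cdots\sum_{s_d=1}^{a_ds_{d-1}}1$, evaluated from the innermost sum outward with extended sums (a polynomial in $a_1,\dots,a_d$). With $b_0=1$, $g_d(b_1,\dots,b_d)=f_d(b_1/b_0,b_2/b_1,\dots,b_d/b_{d-1})$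 for nonzero reals $b_i$. *)

(* Defs.v *)
From HB Require Import structures.
From mathcomp Require Import all_boot all_order all_algebra.
Set Implicit Arguments. Unset Strict Implicit. Unset Printing Implicit Defensive.
Import Order.TTheory GRing.Theory Num.Theory.
Local Open Scope ring_scope.

Section Defs.
Variable R : realFieldType.

(* Bernoulli polynomials, defined by the generating function
   t e^{tx}/(e^t-1) = sum_k B_k(x) t^k/k!, i.e. (e^t - 1) * sum_k B_k(x) t^k/k! = t e^{tx}
   as formal power series in t.  Comparing coefficients of t^(m+1)/(m+1)! gives
   sum_{j <= m} C(m+1,j) B_j(x) = (m+1) x^m, which determines B_m(x) recursively. *)
Fixpoint bernoulli_seq (m : nat) : seq {poly R} :=
  match m with
  | 0 => [:: 1]
  | m'.+1 =>
      let s := bernoulli_seq m' in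
      rcons s ((m'.+2)%:R^-1 *:
                 ((m'.+2)%:R *: 'X^(m'.+1)
                  - \sum_(j < m'.+1) ('C(m'.+2, j))%:R *: s`_j))
  end.

Definition bernpoly (k : nat) : {poly R} := (bernoulli_seq k)`_k.

Definition bernnum (k : nat) : R := (bernpoly k).[0].

Definition Ppoly (k : nat) : {poly R} :=
  (k.+1)%:R^-1 *: ((bernpoly k.+1 \Po ('X + 1)) - (bernnum k.+1)%:P).

(* Extended sum  sum_{s=1}^{u} h := h_0 u + sum_{k>=1} h_k P_k(u),
   for a polynomial h(s) and an upper limit u which is itself a polynomial
   (in the variable of the enclosing sum). *)
Definition ext_sum (h u : {poly R}) : {poly R} :=
  h`_0 *: u + \sum_(1 <= k < size h) h`_k *: (Ppoly k \Po u).

(* Nested extended sum  sum_{s_1=1}^{u_1(s_0)} sum_{s_2=1}^{u_2(s_1)} ... 1,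
   evaluated from the innermost sum outward; the result is a polynomial in s_0. *)
Fixpoint nested_sum (us : seq {poly R}) : {poly R} :=
  if us is u :: us' then ext_sum (nested_sum us') u else 1.

(* f_d(a_1,...,a_d) (evaluated at real values of the a_i); upper limits
   a_1 (= a_1 s_0 with s_0 = 1), a_2 s_1, ..., a_d s_{d-1}. *)
Definition f_d (a : seq R) : R := (nested_sum [seq c *: 'X | c <- a]).[1].

(* g_d(b_1,...,b_d) = f_d(b_1/b_0, b_2/b_1, ..., b_d/b_{d-1}) with b_0 = 1
   (b 0 is required to be 1 in the theorem). *)
Definition g_d (d : nat) (b : nat -> R) : R :=
  f_d [seq b k.+1 / b k | k <- iota 0 d].

Definition bar_limit (a : R) : {poly R} :=
  if 0 < a then a *: 'X else - (a *: 'X) - 1.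

End Defs.

(* Main.v *)
Require Import Defs.
From HB Require Import structures.
From mathcomp Require Import all_boot all_order all_algebra.
From mathcomp Require Import ring.
Import Order.TTheory GRing.Theory Num.Theory.
Local Open Scope ring_scope.

Section Bern.
Variable R : realFieldType.

Lemma size_bseq m : size (bernoulli_seq R m) = m.+1.
Proof. by elim: m => [|m IH] //=; rewrite size_rcons IH. Qed.

Lemma nth_bseq m j : (j <= m)%N -> (bernoulli_seq R m)`_j = bernpoly R j.
Proof.
elim: m => [|m IH]; first by rewrite leqn0 => /eqP ->.
rewrite leq_eqVlt => /orP [/eqP -> //|hj].
by rewrite /= nth_rcons size_bseq hj IH.
Qed.

Lemma brec m : \sum_(j < m.+1) ('C(m.+1, j))%:R *: bernpoly R j
   = (m.+1)%:R *: 'X^m.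
Proof.
case: m => [|m]; first by rewrite big_ord1 /= /bernpoly /= scale1r.
rewrite big_ord_recr /= binSn.
have -> : bernpoly R m.+1 = (m.+2)%:R^-1 *:
     ((m.+2)%:R *: 'X^(m.+1)
      - \sum_(j < m.+1) ('C(m.+2, j))%:R *: bernpoly R j).
  rewrite {1}/bernpoly /= nth_rcons size_bseq ltnn eqxx.
  congr (_ *: (_ - _)); apply: eq_bigr => j _.
  by rewrite nth_bseq // -ltnS.
rewrite scalerA mulfV ?pnatr_eq0 // scale1r.
by rewrite addrC subrK.
Qed.

Lemma seq_uniq (Y Z : nat -> {poly R}) :
  (forall m, \sum_(j < m.+1) ('C(m.+1, j))%:R *: Y j
           = \sum_(j < m.+1) ('C(m.+1, j))%:R *: Z j) -> forall n, Y n = Z n.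
Proof.
move=> H; elim/ltn_ind => n IH.
move: (H n); rewrite !big_ord_recr /=.
rewrite (eq_bigr (fun j : 'I_n => ('C(n.+1, j))%:R *: Z j)); last first.
  by move=> j _; rewrite IH.
move/addrI; rewrite binSn; apply: scalerI.
by rewrite pnatr_eq0.
Qed.

Lemma comp_sum I (r : seq I) (P : pred I) (F : I -> {poly R}) q :
  (\sum_(i <- r | P i) F i) \Po q = \sum_(i <- r | P i) (F i \Po q).
Proof.
exact: (big_morph (fun p => p \Po q) (fun p s => comp_polyD p s q) (comp_poly0 q)).
Qed.

Lemma deriv_sum I (r : seq I) (P : pred I) (F : I -> {poly R}) :
  (\sum_(i <- r | P i) F i)^`() = \sum_(i <- r | P i) (F i)^`().
Proof.
exact: (big_morph (@deriv R) (@derivD R) (deriv0 R)).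
Qed.

Lemma shiftB n : bernpoly R n \Po ('X + 1) - bernpoly R n = n%:R *: 'X^(n.-1).
Proof.
apply: (@seq_uniq (fun n => bernpoly R n \Po ('X + 1) - bernpoly R n)
                 (fun n => n%:R *: 'X^(n.-1))) => m.
transitivity ((m.+1)%:R *: (('X + 1) ^+ m - 'X^m) : {poly R}).
  under eq_bigr do rewrite scalerBr -comp_polyZ.
  rewrite sumrB -comp_sum brec comp_polyZ -scalerBr; congr (_ *: (_ - _)).
  by rewrite rmorphXn /= comp_polyX.
have := congr1 (@deriv R) (exprD1n ('X : {poly R}) m.+1).
rewrite deriv_exp derivD derivX derivC addr0 mul1r deriv_sum big_ord_recr /=.
rewrite binn mulr1n /= derivXn /= => H.
rewrite scalerBr !scaler_nat H addrK; apply: eq_bigr => j _.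
by rewrite derivMn derivXn !scaler_nat.
Qed.

Lemma Pdelta k : Ppoly R k - (Ppoly R k \Po ('X - 1)) = 'X^k.
Proof.
rewrite /Ppoly comp_polyZ comp_polyB comp_polyC -scalerBr.
have -> : 'X - 1 = 'X - (1%:P : {poly R}) by rewrite polyC1.
have -> : 'X + 1 = 'X + (1%:P : {poly R}) by rewrite polyC1.
rewrite comp_polyXaddC_K opprB addrA subrK polyC1.
by rewrite shiftB /= scalerA mulVf ?pnatr_eq0 // scale1r.
Qed.

Lemma P0 k : (0 < k)%N -> (Ppoly R k).[0] = 0.
Proof.
move=> hk.
have := congr1 (fun p => p.[0]) (shiftB k.+1).
rewrite /= !hornerE horner_comp !hornerE expr0n /= -(prednK hk) /= mulr0 => H.
by rewrite /bernnum H mulr0.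
Qed.

Definition T (h : {poly R}) := ext_sum h 'X.

Lemma extT h u : ext_sum h u = T h \Po u.
Proof.
rewrite /T /ext_sum comp_polyD comp_polyZ comp_polyX comp_sum; congr (_ + _).
by apply: eq_bigr => k _; rewrite comp_polyZ comp_polyXr.
Qed.

Lemma TD h : T h - (T h \Po ('X - 1)) = h.
Proof.
rewrite /T /ext_sum comp_polyD comp_polyZ comp_polyX comp_sum.
rewrite opprD addrACA -scalerBr opprB [X in h`_0 *: X]addrC subrK -sumrB.
under eq_bigr do rewrite comp_polyXr comp_polyZ -scalerBr Pdelta.
have [->|hs] := eqVneq h 0; first by rewrite size_poly0 big_geq // coef0 scale0r addr0.
rewrite -[RHS]coefK poly_def -(big_mkord xpredT (fun i => h`_i *: 'X^i)).
rewrite (@big_ltn _ _ _ 0) ?size_poly_gt0 //.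
Qed.

Lemma T0 h : (T h).[0] = 0.
Proof.
rewrite /T /ext_sum hornerD hornerZ hornerX mulr0 add0r horner_sum.
rewrite big_nat_cond big1 // => k /andP [/andP [hk _] _].
by rewrite hornerZ comp_polyXr P0 ?mulr0.
Qed.

Lemma Tm1 h : (T h).[-1] = - h.[0].
Proof.
have := congr1 (fun p => p.[0]) (TD h).
have e : ('X - 1 : {poly R}).[0] = -1 by rewrite !hornerE.
rewrite /= hornerD hornerN horner_comp T0 e sub0r => <-; by rewrite opprK.
Qed.

Lemma Duniq (p q : {poly R}) : p - (p \Po ('X - 1)) = q - (q \Po ('X - 1)) -> p.[0] = q.[0] -> p = q.
Proof.
move=> hD h0; apply/eqP; rewrite -subr_eq0; apply/negPn/negP => hr.
set r := p - q in hr.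
have hc : r \Po ('X - 1) = r.
  rewrite /r comp_polyB; apply/eqP; rewrite -subr_eq0; apply/eqP.
  transitivity ((q - (q \Po ('X - 1))) - (p - (p \Po ('X - 1)))); first by ring.
  by rewrite hD subrr.
have hn : forall n : nat, r.[n%:R] = 0.
  elim=> [|n IH]; first by rewrite /r hornerD hornerN h0 subrr.
  have e : ('X - 1 : {poly R}).[n.+1%:R] = n%:R by rewrite !hornerE -natr1 addrK.
  by rewrite -hc horner_comp e.
suff : (size [seq (i%:R : R) | i <- iota 0 (size r)] < size r)%N.
  by rewrite size_map size_iota ltnn.
apply: (max_poly_roots hr).
  by apply/allP => x /mapP [i _ ->]; rewrite /root hn.
rewrite map_inj_uniq ?iota_uniq // => i j /eqP; rewrite eqr_nat => /eqP.
done.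
Qed.

Lemma TZ c h : T (c *: h) = c *: T h.
Proof.
apply: Duniq; last by rewrite hornerZ !T0 mulr0.
by rewrite TD comp_polyZ -scalerBr TD.
Qed.

Lemma Refl h : T h \Po (- 'X - 1) = - T (h \Po (- 'X)) - (h.[0])%:P.
Proof.
apply: Duniq; last first.
  have e0 : (- 'X - 1 : {poly R}).[0] = -1 by rewrite !hornerE oppr0 sub0r.
  by rewrite horner_comp e0 Tm1 hornerD !hornerN hornerC T0 oppr0 sub0r.
have e1 : (- 'X - 1) \Po ('X - 1) = - 'X :> {poly R}.
  by rewrite comp_polyB raddfN /= comp_polyX -polyC1 comp_polyC polyC1; ring.
have e2 : ('X - 1) \Po (- 'X) = - 'X - 1 :> {poly R}.
  by rewrite comp_polyB comp_polyX -polyC1 comp_polyC polyC1.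
rewrite -comp_polyA e1.
have := congr1 (fun p => p \Po (- 'X)) (TD h).
rewrite /= comp_polyB -comp_polyA e2 => H.
rewrite comp_polyB raddfN /= comp_polyC.
transitivity (- (h \Po - 'X)); first by rewrite -H; ring.
by rewrite -{1}(TD (h \Po - 'X)); ring.
Qed.
End Bern.
Arguments T {R}.

Lemma L3 (R : realFieldType) (a : R) q : (- (a *: 'X) - 1) \Po q = - (a *: q) - 1.
Proof. by rewrite comp_polyB raddfN /= comp_polyZ comp_polyX -polyC1 comp_polyC polyC1. Qed.

Lemma cs (R : realFieldType) (x y : R) : x != 0 -> y / x = (y / `|x|) * Num.sg x.
Proof.
move=> hx; have [hp|hp|hn] := ltrgtP x 0.
- by rewrite ltr0_norm // ltr0_sg // invrN; ring.
- by rewrite gtr0_norm // gtr0_sg // mulr1.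
- by move: hx; rewrite hn eqxx.
Qed.

Lemma main_ind (R : realFieldType) d (b : nat -> R) (hb0 : b 0%N = 1)
  (hbnz : forall i : nat, (1 <= i <= d)%N -> b i != 0) (hbd : 0 < b d) :
  forall n j, (j + n)%N = d ->
  nested_sum [seq (b k.+1 / b k) *: 'X | k <- iota j n] =
   Num.sg (\prod_(j.+1 <= i < d.+1) b i) *:
    (nested_sum [seq bar_limit (b k.+1 / `|b k|) | k <- iota j n] \Po (Num.sg (b j) *: 'X))
  /\ ((j < d)%N -> (nested_sum [seq bar_limit (b k.+1 / `|b k|) | k <- iota j n]).[0] = 0).
Proof.
elim=> [|n IH] j hj.
  rewrite addn0 in hj; subst j.
  by rewrite /= big_geq // sgr1 scale1r -polyC1 comp_polyC ltnn.
have [IHG IHH] : _ /\ _ := IH j.+1 ltac:(by rewrite addSnnS).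
rewrite /=.
set G' := nested_sum _ in IHG *; set H' := nested_sum _ in IHG IHH *.
rewrite !extT.
have hj1 : (j.+1 <= d)%N by rewrite -hj addnS ltnS leq_addr.
have bj : b j != 0.
  case: j hj hj1 {IH IHG IHH G' H'} => [|j] hj hj1; first by rewrite hb0 oner_eq0.
  by apply: hbnz; rewrite /= ltnW.
have bj1 : b j.+1 != 0 by apply: hbnz.
have hbj : 0 < `|b j| by rewrite normr_gt0.
rewrite (@cs _ (b j) (b j.+1) bj) (@big_ltn _ _ _ j.+1) ?ltnS // sgrM.
set e' := Num.sg (\prod_(_ <= _ < _) _).
set s := Num.sg (b j).
set a := b j.+1 / `|b j|.
have [hp|hp|hn] := ltrgtP (b j.+1) 0; last first.
- by move: bj1; rewrite hn eqxx.
-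
  have ha : 0 < a by rewrite /a pmulr_lgt0 ?invr_gt0.
  rewrite (gtr0_sg hp) in IHG.
  rewrite IHG !scale1r comp_polyXr TZ.
  rewrite /bar_limit ha (gtr0_sg hp) mul1r.
  split; last first.
    by move=> _; rewrite horner_comp hornerZ hornerX mulr0 T0.
  rewrite comp_polyZ -comp_polyA comp_polyZ comp_polyX scalerA.
  done.
-
  have ha : a < 0 by rewrite /a pmulr_llt0 ?invr_gt0.
  have hjd : (j.+1 < d)%N.
    rewrite ltn_neqAle hj1 andbT; apply/negP => /eqP he.
    by rewrite he in hp; have := lt_trans hbd hp; rewrite ltxx.
  have H0 := IHH hjd.
  rewrite (ltr0_sg hp) in IHG.
  rewrite IHG TZ scaleN1r.
  have RR := Refl _ H'; rewrite H0 polyC0 subr0 in RR.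
  rewrite -[T (H' \Po - 'X)]opprK -RR.
  rewrite /bar_limit ltNge (ltW ha) /=.
  rewrite (ltr0_sg hp).
  split; last first.
    have e : (- (a *: 'X) - 1 : {poly R}).[0] = -1.
      by rewrite !hornerE oppr0 sub0r.
    by move=> _; rewrite horner_comp e Tm1 H0 oppr0.
  rewrite comp_polyZ raddfN /= -!comp_polyA.
  have -> : (- 'X - 1) = (- (1 *: 'X) - 1 : {poly R}) by rewrite scale1r.
  rewrite !L3 scale1r scalerA mulN1r scaleNr scalerN.
  done.
Qed.

Theorem mainTheorem12 (R : realFieldType) (d : nat) (b : nat -> R)
  (hd : (0 < d)%N)
  (hb0 : b 0%N = 1)
  (hbnz : forall i : nat, (1 <= i <= d)%N -> b i != 0)
  (hbd : 0 < b d) :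
  g_d d b =
  Num.sg (\prod_(1 <= i < d.+1) b i) *
  (nested_sum [seq bar_limit (b k / `|b k.-1|) | k <- iota 1 d]).[1].
Proof.
have [HG _] := @main_ind R d b hb0 hbnz hbd d 0%N erefl.
rewrite /g_d /f_d -map_comp.
have -> : [seq bar_limit (b k / `|b k.-1|) | k <- iota 1 d]
        = [seq bar_limit (b k.+1 / `|b k|) | k <- iota 0 d].
  by rewrite -(addn0 1%N) iotaDl -map_comp.
rewrite (eq_map (g := fun k => (b k.+1 / b k) *: 'X)) // HG hornerZ horner_comp.
by rewrite hb0 sgr1 scale1r hornerX.
Qed.
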